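(* Let $s\in\mathbb{Z}$ and let $Q\subseteq P$ be non-empty with $\mathrm{diam}_\infty(Q)\le\alpha_s$. Then the set of grid points $a_{\alpha_s}(Q)$ is contained in a face of $\square_{\alpha_s}$. Equivalently, for every simplex $\sigma=\{p_0,\ldots,p_k\}$ of $\mathcal{R}^\infty_{\alpha_s/2}$, the set $\{a_{\alpha_s}(p_0),\ldots,a_{\alpha_s}(p_k)\}$ is contained in a face of $\square_{\alpha_s}$.
   Context: Fix $d\ge1$, $\lambda>0$, $\alpha_s=\lambda2^s$, and let $G_{\alpha_s}\subset\mathbb{R}^d$ be a translate of the grid $\alpha_s\mathbb{Z}^d$. $\square_{\alpha_s}$ is the cubical complex of faces $\prod_j[x_j,x_j+m_j]$ with $x\in G_{\alpha_s}$, $m_j\in\{0,\alpha_s\}$. $P\subset\mathbb{R}^d$ is a finite point set; for $p\in P$, $a_{\alpha_s}(p)$ is the point of $G_{\alpha_s}$ whose Voronoi cell (the cube of side $\alpha_s$ centered at it) contains $p$, assumed unique. $\mathrm{diam}_\infty$ is the diameter in the $L_\infty$-norm. $\mathcal{R}^\infty_\alpha$ denotes the Rips complex of $P$ at scale $2\alpha$ in the $L_\infty$-norm: the simplicial complex whose simplices are the non-empty subsets of $P$ of $L_\infty$-diameter at most $2\alpha$. *)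

(* Defs.v *)
From mathcomp Require Import all_boot all_order all_algebra.
From mathcomp Require Import reals.
Set Implicit Arguments. Unset Strict Implicit. Unset Printing Implicit Defensive.
Import Order.TTheory GRing.Theory Num.Theory.
Local Open Scope ring_scope.

Section Defs.
Variables (R : realType) (d : nat).
Definition point := {ffun 'I_d -> R}.

Definition alpha_s (lambda : R) (s : int) : R := lambda * (2 : R) ^ s.

Definition in_grid (alpha : R) (t : point) (x : point) : Prop :=
  exists k : 'I_d -> int, forall j, x j = t j + alpha * (k j)%:~R.

Definition in_voronoi (alpha : R) (g p : point) : Prop :=
  forall j, `|p j - g j| <= alpha / 2.

Definition linf_dist (p q : point) : R := \big[Num.max/0]_(j < d) `|p j - q j|.
Definition diam_inf (Q : seq point) : R :=
  \big[Num.max/0]_(p <- Q) \big[Num.max/0]_(q <- Q) linf_dist p q.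

(* the face prod_j [x_j, x_j + m_j] of the cubical complex, m_j in {0, alpha}
   encoded by a boolean *)
Definition in_face (alpha : R) (x : point) (m : 'I_d -> bool) (y : point) : Prop :=
  forall j, x j <= y j <= x j + (if m j then alpha else 0).

Definition contained_in_face (alpha : R) (t : point) (S : seq point) : Prop :=
  exists x : point, in_grid alpha t x /\
  exists m : 'I_d -> bool, forall y, y \in S -> in_face alpha x m y.
End Defs.

(* Main.v *)
Require Import Defs.
From mathcomp Require Import all_boot all_order all_algebra.
From mathcomp Require Import reals.
From mathcomp Require Import ring lra.
Import Order.TTheory GRing.Theory Num.Theory.
Local Open Scope ring_scope.

Set Implicit Arguments. Unset Strict Implicit.
Section Aux.
Variable R : realType.

Lemma bigmax_ge (I : eqType) (r : seq I) (F : I -> R) x :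
  x \in r -> F x <= \big[Num.max/0]_(i <- r) F i.
Proof.
elim: r => [//|y r IH]; rewrite in_cons big_cons le_max.
by case/orP => [/eqP -> | /IH ->]; rewrite ?lexx ?orbT.
Qed.

Lemma argmin_ex (I : eqType) (f : I -> R) (b : I) (r : seq I) :
  exists2 m, m \in b :: r & forall q, q \in b :: r -> f m <= f q.
Proof.
elim: r b => [|y r IH] b.
  by exists b => [|q]; rewrite ?mem_seq1 // => /eqP ->.
have [m mi mmin] := IH y.
case: (leP (f b) (f m)) => h.
  exists b; first by rewrite mem_head.
  move=> q; rewrite in_cons => /orP[/eqP -> // | qi]; exact: le_trans h (mmin q qi).
exists m; first by rewrite in_cons mi orbT.
move=> q; rewrite in_cons => /orP[/eqP -> | qi]; [exact: ltW | exact: mmin].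
Qed.
End Aux.

Theorem lemma6 (R : realType) (d : nat) (hd : (1 <= d)%N)
  (lambda : R) (hlambda : 0 < lambda) (s : int) (t : point R d)
  (P : seq (point R d)) (a : point R d -> point R d)
  (ha_grid : forall p, p \in P -> in_grid (alpha_s lambda s) t (a p))
  (ha_cell : forall p, p \in P -> in_voronoi (alpha_s lambda s) (a p) p)
  (ha_uniq : forall p g, p \in P -> in_grid (alpha_s lambda s) t g ->
                in_voronoi (alpha_s lambda s) g p -> g = a p)
  (Q : seq (point R d)) (hQP : {subset Q <= P}) (hQ0 : Q != [::])
  (hdiam : diam_inf Q <= alpha_s lambda s) :
  contained_in_face (alpha_s lambda s) t [seq a q | q <- Q].
Proof.
move: ha_grid ha_cell ha_uniq hdiam.
have : 0 < alpha_s lambda s by rewrite /alpha_s mulr_gt0 // exprz_gt0.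
move: (alpha_s lambda s) => al hal ha_grid ha_cell ha_uniq hdiam.
have hdist : forall p q j, p \in Q -> q \in Q -> `|p j - q j| <= al.
  move=> p q j pQ qQ; apply: (le_trans _ hdiam).
  rewrite /diam_inf.
  apply: (le_trans _ (bigmax_ge _ pQ)).
  apply: (le_trans _ (bigmax_ge (fun q => linf_dist p q) qQ)).
  exact: (bigmax_ge (fun j => `|p j - q j|) (mem_index_enum j)).
have hstrict : forall p j, p \in P -> `|p j - a p j| < al / 2.
  move=> p j pP; rewrite lt_neqAle ha_cell // andbT; apply/negP => /eqP heq.
  have [k hk] := ha_grid p pP.
  pose e : R := 2 * (p j - a p j).
  pose g : point R d := [ffun i => if i == j then a p i + e else a p i].
  have gg : in_grid al t g.
    exists (fun i => if i == j then k i + (if 0 <= p j - a p j then 1 else -1) else k i).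
    move=> i; rewrite ffunE; case: eqP => [->|_]; last exact: hk.
    rewrite /e; case: (boolP (0 <= p j - a p j)) => h.
      rewrite ger0_norm // in heq; by rewrite heq hk intrD mulrDr //=; field.
    rewrite ltr0_norm ?ltNge // in heq.
    have -> : p j - a p j = - (al / 2) by rewrite -heq opprK.
    by rewrite hk intrD mulrDr /=; field.
  have gv : in_voronoi al g p.
    move=> i; rewrite ffunE; case: eqP => [->|_]; last exact: ha_cell.
    have -> : p j - (a p j + e) = - (p j - a p j) by rewrite /e; ring.
    rewrite normrN; exact: ha_cell.
  have := ha_uniq _ _ pP gg gv.
  move/(congr1 (fun f : point R d => f j)); rewrite ffunE eqxx.
  move=> h0; have h1 : p j - a p j = 0 by move: h0; rewrite /e; lra.
  by move: heq hal; rewrite h1 normr0; lra.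
have hle : forall p q j, p \in Q -> q \in Q -> `|a p j - a q j| <= al.
  move=> p q j pQ qQ; have pP := hQP _ pQ; have qP := hQP _ qQ.
  have h1 := hstrict p j pP; have h2 := hstrict q j qP; have h3 := hdist p q j pQ qQ.
  have t1 := ler_distD (p j) (a p j) (a q j).
  have t2 := ler_distD (q j) (p j) (a q j).
  rewrite (distrC (a p j) (p j)) in t1.
  have hlt : `|a p j - a q j| < al * 2 by lra.
  have [kp hkp] := ha_grid p pP; have [kq hkq] := ha_grid q qP.
  move: hlt; have -> : a p j - a q j = al * (kp j - kq j)%:~R by rewrite hkp hkq intrB; ring.
  rewrite normrM (gtr0_norm hal) ltr_pM2l // -intr_norm.
  rewrite -[2]/((2:int)%:~R) ltr_int => hz.
  rewrite -[X in _ <= X]mulr1 ler_pM2l // -[1]/((1:int)%:~R) ler_int.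
  by move: hz; case: (`|kp j - kq j|).
clear hdiam; case: Q hQP hQ0 hdist hle => [//|q0 Q'] hQP _ hdist hle.
have : forall j, exists mq, mq \in q0 :: Q' /\ forall q, q \in q0 :: Q' -> a mq j <= a q j.
  move=> j; have [m mi mm] := argmin_ex (fun q => a q j) q0 Q'; by exists m.
case/fin_all_exists => mn hmn.
pose x : point R d := [ffun j => a (mn j) j].
have : forall j, exists kk : int, x j = t j + al * kk%:~R.
  move=> j; have [k hk] := ha_grid (mn j) (hQP _ (hmn j).1).
  by exists (k j); rewrite ffunE hk.
case/fin_all_exists => k hk.
exists x; split; first by exists k.
exists (fun _ => true) => y /mapP [q qQ ->] j /=.
rewrite ffunE; have [mQ mm] := hmn j; rewrite mm //=.
have := hle q (mn j) j qQ mQ; rewrite ler_norml; lra.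
Qed.
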